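(* Let $Q$ be a convex $k$-gon in $\mathbb{R}^2$ containing the origin in its interior, with edges $e_0,\dots,e_{k-1}$. Let $p,q\in\mathbb{R}^2$ be two distinct points such that the segment $pq$ is not parallel to any edge or diagonal of $Q$. Then an edgelet $g$ with label $\psi(g)=(e_i,e_j)$ appears on the bisector $b_{pq}$ if and only if there is an oriented line parallel to $\vec{pq}$ (and oriented in the direction of $\vec{pq}$) that crosses $\partial Q$ at the relative interiors of $e_i$ and $e_j$, in this order.
   Context: A homothetic placement of $Q$ is a set $Q'=x+\lambda Q$ with $x\in\mathbb{R}^2$ (its center) and $\lambda>0$; edges of $Q'$ are identified with the corresponding edges of $Q$. For $x,y\in\mathbb{R}^2$, $d_Q(x,y)=\min\{\lambda\ge 0: y\in x+\lambda Q\}$. The bisector $b_{pq}$ is the set $\{x: d_Q(x,p)=d_Q(x,q)\}$, equivalently the locus of centers of homothetic placements of $Q$ whose boundary contains both $p$ and $q$. An edgelet of $b_{pq}$ with label $(e_i,e_j)$ is a maximal segment of $b_{pq}$ consisting of centers of placements $Q'$ for which $p$ lies in the relative interior of the edge $e_i$ of $Q'$ and $q$ lies in the relative interior of the edge $e_j$ of $Q'$. *)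

(* Defs.v *)
From HB Require Import structures.
From mathcomp Require Import all_boot all_order all_algebra.
Set Implicit Arguments. Unset Strict Implicit. Unset Printing Implicit Defensive.
Import Order.TTheory GRing.Theory Num.Theory.
Local Open Scope ring_scope.

Section Plane.
Variable R : realFieldType.

Definition pt := (R * R)%type.
Definition padd (a b : pt) : pt := (a.1 + b.1, a.2 + b.2).
Definition psub (a b : pt) : pt := (a.1 - b.1, a.2 - b.2).
Definition pscale (c : R) (a : pt) : pt := (c * a.1, c * a.2).
Definition cross (a b : pt) : R := a.1 * b.2 - a.2 * b.1.
(* orientation of the triple (a,b,c): > 0 iff counterclockwise *)
Definition orient (a b c : pt) : R := cross (psub b a) (psub c a).

Variable k : nat.
Definition nexti (i : 'I_k) : 'I_k :=
  match k as n return 'I_n -> 'I_n with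
  | 0 => fun i => i
  | n.+1 => fun i => inord ((i.+1) %% n.+1)
  end i.

(* The polygon Q is given by its vertices v_0, ..., v_{k-1} listed
   counterclockwise; edge e_i is the segment [v_i, v_{i+1 mod k}]. *)
Variable v : 'I_k -> pt.

Definition convex_ccw_polygon : Prop :=
  forall (i l : 'I_k), l != i -> l != nexti i ->
    0 < orient (v i) (v (nexti i)) (v l).

Definition origin_in_interior : Prop :=
  forall i : 'I_k, 0 < orient (v i) (v (nexti i)) (0, 0).

Definition Qset (x : pt) : Prop :=
  forall i : 'I_k, 0 <= orient (v i) (v (nexti i)) x.

Definition edge_relint (i : 'I_k) (y : pt) : Prop :=
  exists t : R, 0 < t /\ t < 1 /\ y = padd (v i) (pscale t (psub (v (nexti i)) (v i))).

Definition in_placement (x : pt) (lam : R) (y : pt) : Prop :=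
  exists z, Qset z /\ y = padd x (pscale lam z).

Definition dQ_is (x y : pt) (lam : R) : Prop :=
  0 <= lam /\ in_placement x lam y /\
  forall mu, 0 <= mu -> in_placement x mu y -> lam <= mu.

Definition bisector (p q : pt) (x : pt) : Prop :=
  exists lam, dQ_is x p lam /\ dQ_is x q lam.

Definition labeled_center (p q : pt) (i j : 'I_k) (x : pt) : Prop :=
  exists lam, 0 < lam /\
    (exists y, edge_relint i y /\ p = padd x (pscale lam y)) /\
    (exists z, edge_relint j z /\ q = padd x (pscale lam z)).

Definition is_segment (g : pt -> Prop) : Prop :=
  (exists x, g x) /\
  (forall a b, g a -> g b -> forall t, 0 <= t -> t <= 1 ->
      g (padd a (pscale t (psub b a)))) /\
  (forall a b c, g a -> g b -> g c -> orient a b c = 0).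

Definition edgelet (p q : pt) (i j : 'I_k) (g : pt -> Prop) : Prop :=
  is_segment g /\
  (forall x, g x -> bisector p q x /\ labeled_center p q i j x) /\
  (forall g' : pt -> Prop, is_segment g' ->
      (forall x, g' x -> bisector p q x /\ labeled_center p q i j x) ->
      (forall x, g x -> g' x) -> forall x, g' x -> g x).

Definition edgelet_appears (p q : pt) (i j : 'I_k) : Prop :=
  exists g, edgelet p q i j g.

Definition oriented_line_crosses (p q : pt) (i j : 'I_k) : Prop :=
  exists a b tau, edge_relint i a /\ edge_relint j b /\ 0 < tau /\
    b = padd a (pscale tau (psub q p)).

Definition general_position (p q : pt) : Prop :=
  forall (i l : 'I_k), i != l -> cross (psub q p) (psub (v l) (v i)) != 0.

End Plane.

(* Main.v *)
Require Import Defs.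
From HB Require Import structures.
From mathcomp Require Import all_boot all_order all_algebra.
From mathcomp Require Import ring lra zify.
Import Order.TTheory GRing.Theory Num.Theory.
Local Open Scope ring_scope.
Set Implicit Arguments.

Lemma orient_aff {R : realFieldType} (A B P Q : pt R) t :
  orient A B (padd P (pscale t (psub Q P))) = (1 - t) * orient A B P + t * orient A B Q.
Proof. case: A B P Q => [a1 a2] [b1 b2] [p1 p2] [q1 q2]; rewrite /orient /cross /padd /pscale /psub /=; ring. Qed.

Lemma orient_aa {R : realFieldType} (A B : pt R) : orient A B A = 0.
Proof. case: A B => [a1 a2] [b1 b2]; rewrite /orient /cross /padd /pscale /psub /=; ring. Qed.

Lemma orient_bb {R : realFieldType} (A B : pt R) : orient A B B = 0.
Proof. case: A B => [a1 a2] [b1 b2]; rewrite /orient /cross /padd /pscale /psub /=; ring. Qed.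

Lemma nexti_neq k (i : 'I_k) : (1 < k)%N -> nexti i != i.
Proof.
case: k i => [|n] i hk; first by case: i.
rewrite /nexti /=. apply/eqP => /(congr1 (@nat_of_ord _)). rewrite inordK; last by rewrite ltn_pmod.
have hi := ltn_ord i. case: (ltnP i.+1 n.+1) => h.
  by rewrite modn_small // => /eqP; rewrite (gtn_eqF (ltnSn i)).
have ei : nat_of_ord i = n by lia.
by rewrite ei modnn => e; lia.
Qed.

Lemma orient_vert {R : realFieldType} {k} {v : 'I_k -> pt R}
  (Hc : convex_ccw_polygon v) l m : 0 <= orient (v l) (v (nexti l)) (v m).
Proof.
case: (eqVneq m l) => [->|h1]; first by rewrite orient_aa.
case: (eqVneq m (nexti l)) => [->|h2]; first by rewrite orient_bb.
exact: ltW (Hc _ _ h1 h2).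
Qed.

Lemma relint_Q {R : realFieldType} {k} {v : 'I_k -> pt R}
  (Hc : convex_ccw_polygon v) m y : edge_relint v m y -> Qset v y.
Proof.
move=> [t [t0 [t1 ->]]] l. rewrite orient_aff.
have h1 := orient_vert Hc l m; have h2 := orient_vert Hc l (nexti m).
apply: addr_ge0; apply: mulr_ge0 => //; lra.
Qed.

Lemma dQ_alg {R : realFieldType} (A B x z : pt R) (lam mu t : R) :
  0 < lam -> 0 <= mu ->
  0 <= orient A B z -> 0 < orient A B (0, 0) ->
  padd x (pscale lam (padd A (pscale t (psub B A)))) = padd x (pscale mu z) ->
  lam <= mu.
Proof.
case: A B x z => [a1 a2] [b1 b2] [x1 x2] [z1 z2].
rewrite /orient /cross /padd /pscale /psub /= => l0 m0 fz c [e1 e2].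
have e1' : lam * (a1 + t * (b1 - a1)) = mu * z1 by lra.
have e2' : lam * (a2 + t * (b2 - a2)) = mu * z2 by lra.
have E : mu * ((b1 - a1) * (z2 - a2) - (b2 - a2) * (z1 - a1))
   = (mu - lam) * ((b1 - a1) * (0 - a2) - (b2 - a2) * (0 - a1)).
  transitivity ((b1 - a1) * (mu * z2) - (b2 - a2) * (mu * z1)
     - mu * ((b1 - a1) * a2 - (b2 - a2) * a1)); first ring.
  rewrite -e1' -e2'; ring.
have : 0 <= (mu - lam) * ((b1 - a1) * (0 - a2) - (b2 - a2) * (0 - a1)).
  by rewrite -E mulr_ge0.
by rewrite pmulr_lge0 // subr_ge0.
Qed.

Lemma dQ_edge {R : realFieldType} {k} {v : 'I_k -> pt R}
  (Hc : convex_ccw_polygon v) (Ho : origin_in_interior v) i x y P lam :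
  0 < lam -> edge_relint v i y -> P = padd x (pscale lam y) -> dQ_is v x P lam.
Proof.
move=> lam0 Hy eP; split; first exact: ltW.
split; first by exists y; split; [exact: (relint_Q Hc Hy) | exact: eP].
move=> mu mu0 [z [Qz ez]].
case: Hy => [t [t0 [t1 ey]]].
apply: (@dQ_alg R _ _ x z lam mu t lam0 mu0 (Qz i) (Ho i)).
by rewrite -ey -eP.
Qed.

Lemma lab_bis {R : realFieldType} {k} {v : 'I_k -> pt R}
  (Hc : convex_ccw_polygon v) (Ho : origin_in_interior v) p q i j x :
  labeled_center v p q i j x -> bisector v p q x.
Proof.
move=> [lam [l0 [[y [Hy ep]] [z [Hz eq]]]]].
have h1 := dQ_edge Hc Ho l0 Hy ep; have h2 := dQ_edge Hc Ho l0 Hz eq.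
by exists lam.
Qed.

Lemma fwd_alg {R : realFieldType} (x y z p q : pt R) (lam : R) :
  0 < lam -> p = padd x (pscale lam y) -> q = padd x (pscale lam z) ->
  z = padd y (pscale lam^-1 (psub q p)).
Proof.
move=> l0 -> ->; case: x y z => [x1 x2] [y1 y2] [z1 z2].
rewrite /padd /pscale /psub /=; have h := lt0r_neq0 l0.
congr (_, _); field; exact: h.
Qed.

Lemma ne_alg {R : realFieldType} (a b p q : pt R) (tau : R) :
  0 < tau -> b = padd a (pscale tau (psub q p)) ->
  p = padd (psub p (pscale tau^-1 a)) (pscale tau^-1 a) /\
  q = padd (psub p (pscale tau^-1 a)) (pscale tau^-1 b).
Proof.
move=> t0 ->; case: a p q => [a1 a2] [p1 p2] [q1 q2].
rewrite /padd /pscale /psub /=; have h := lt0r_neq0 t0.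
split; congr (_, _); field; exact: h.
Qed.

Lemma pos_comb {R : realFieldType} {t a b : R} :
  0 <= t -> t <= 1 -> 0 < a -> 0 < b -> 0 < (1 - t) * a + t * b.
Proof.
move=> t0 t1 a0 b0.
have [tl|tg] := ltP t 1.
  have h1 : 0 < (1 - t) * a by apply: mulr_gt0; lra.
  have h2 : 0 <= t * b by apply: mulr_ge0; lra.
  lra.
have -> : t = 1 by lra.
lra.
Qed.

Lemma conv_comb {R : realFieldType} (A B x1 x2 P : pt R) (lam1 lam2 s1 s2 t : R) :
 0 < lam1 -> 0 < lam2 -> 0 <= t -> t <= 1 -> 0 < s1 -> s1 < 1 -> 0 < s2 -> s2 < 1 ->
 P = padd x1 (pscale lam1 (padd A (pscale s1 (psub B A)))) ->
 P = padd x2 (pscale lam2 (padd A (pscale s2 (psub B A)))) ->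
 exists y, (exists s, 0 < s /\ s < 1 /\ y = padd A (pscale s (psub B A))) /\
   P = padd (padd x1 (pscale t (psub x2 x1))) (pscale (lam1 + t * (lam2 - lam1)) y).
Proof.
move=> l1 l2 t0 t1 s10 s11 s20 s21 e1 e2.
have lam0 : 0 < lam1 + t * (lam2 - lam1).
  have := pos_comb t0 t1 l1 l2; lra.
have N0 : 0 < (1 - t) * (lam1 * s1) + t * (lam2 * s2).
  by apply: pos_comb => //; apply: mulr_gt0.
have N1 : 0 < (1 - t) * (lam1 * (1 - s1)) + t * (lam2 * (1 - s2)).
  by apply: pos_comb => //; apply: mulr_gt0 => //; lra.
set N := (1 - t) * (lam1 * s1) + t * (lam2 * s2).
exists (padd A (pscale (N / (lam1 + t * (lam2 - lam1))) (psub B A))).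
split.
  exists (N / (lam1 + t * (lam2 - lam1))); split; first exact: divr_gt0.
  split=> //. rewrite ltr_pdivrMr // mul1r /N. lra.
have h := lt0r_neq0 lam0.
move: e1 e2 h; rewrite /N; case: P A B x1 x2 => [p1 p2] [a1 a2] [b1 b2] [y1 y2] [z1 z2].
rewrite /padd /pscale /psub /= => e1 e2 h.
case: e1 => e11 e12; case: e2 => e21 e22.
congr (_, _).
  have -> : p1 = (1 - t) * p1 + t * p1 by ring.
  rewrite {1}e11 e21. field. exact: h.
have -> : p2 = (1 - t) * p2 + t * p2 by ring.
rewrite {1}e12 e22. field. exact: h.
Qed.

Definition Gf {R : realFieldType} (A B C D p q x : pt R) : R :=
  cross (psub D C) C * cross (psub B A) (psub p x)
  - cross (psub B A) A * cross (psub D C) (psub q x).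

Definition wv {R : realFieldType} (A B C D : pt R) : pt R :=
  (cross (psub D C) C * (psub B A).1 - cross (psub B A) A * (psub D C).1,
   cross (psub D C) C * (psub B A).2 - cross (psub B A) A * (psub D C).2).

Lemma G0 {R : realFieldType} (A B C D x p q : pt R) (lam s r : R) :
  p = padd x (pscale lam (padd A (pscale s (psub B A)))) ->
  q = padd x (pscale lam (padd C (pscale r (psub D C)))) ->
  Gf A B C D p q x = 0.
Proof.
move=> -> ->; case: A B C D x => [a1 a2] [b1 b2] [c1 c2] [d1 d2] [x1 x2].
rewrite /Gf /cross /padd /pscale /psub /=; ring.
Qed.

Lemma Gdiff {R : realFieldType} (A B C D p q x1 x2 : pt R) :
  cross (wv A B C D) (psub x2 x1) = Gf A B C D p q x1 - Gf A B C D p q x2.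
Proof.
case: A B C D p q x1 x2 => [a1 a2] [b1 b2] [c1 c2] [d1 d2] [p1 p2] [q1 q2] [x1 x2] [y1 y2].
rewrite /wv /Gf /cross /padd /pscale /psub /=; ring.
Qed.

Lemma cross_par {R : realFieldType} (w a b : pt R) :
  w != (0, 0) -> cross w a = 0 -> cross w b = 0 -> cross a b = 0.
Proof.
case: w a b => [w1 w2] [a1 a2] [b1 b2]; rewrite /cross /= => hw ha hb.
have ha' : w1 * a2 = w2 * a1 by lra.
have hb' : w1 * b2 = w2 * b1 by lra.
have h1 : w1 * (a1 * b2 - a2 * b1) = 0.
  transitivity (a1 * (w1 * b2) - b1 * (w1 * a2)); first ring.
  rewrite ha' hb'; ring.
have h2 : w2 * (a1 * b2 - a2 * b1) = 0.
  transitivity (b2 * (w2 * a1) - a2 * (w2 * b1)); first ring.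
  rewrite -ha' -hb'; ring.
move/eqP: h1; rewrite mulf_eq0 => /orP [/eqP w10|/eqP //].
move/eqP: h2; rewrite mulf_eq0 => /orP [/eqP w20|/eqP //].
by move: hw; rewrite w10 w20 eqxx.
Qed.

Lemma w_nz {R : realFieldType} (A B C D a b d : pt R) (s r tau : R) :
  0 < orient A B (0, 0) -> 0 < orient C D (0, 0) ->
  a = padd A (pscale s (psub B A)) -> b = padd C (pscale r (psub D C)) ->
  0 <= orient A B b -> 0 <= orient C D a ->
  b = padd a (pscale tau d) -> 0 < tau -> cross d (psub B A) != 0 ->
  wv A B C D != (0, 0).
Proof.
move=> ci cj ea eb fi fj ebd t0 gp.
have ea' : a = padd b (pscale (- tau) d).
  rewrite ebd; case: a d {ea eb ebd fi fj gp} => [a1 a2] [d1 d2].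
  rewrite /padd /pscale /=; congr (_, _); ring.
have Efi : orient A B b = tau * cross (psub B A) d.
  rewrite ebd ea; case: A B d {ea eb ebd fi fj gp ea' ci} => [a1 a2] [b1 b2] [d1 d2].
  rewrite /orient /cross /padd /pscale /psub /=; ring.
have Efj : orient C D a = - tau * cross (psub D C) d.
  rewrite ea' eb; case: C D d {ea eb ebd fi fj gp ea' cj Efi} => [a1 a2] [b1 b2] [d1 d2].
  rewrite /orient /cross /padd /pscale /psub /=; ring.
have Ew : cross (wv A B C D) d =
   orient A B (0, 0) * cross (psub D C) d - orient C D (0, 0) * cross (psub B A) d.
  case: A B C D d {ea eb ebd fi fj gp ea' ci cj Efi Efj} => [a1 a2] [b1 b2] [c1 c2] [d1 d2] [e1 e2].
  rewrite /wv /orient /cross /padd /pscale /psub /=; ring.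
have Egp : cross d (psub B A) = - cross (psub B A) d.
  case: B A d {ea eb ebd fi fj gp ea' ci cj Efi Efj Ew} => [a1 a2] [b1 b2] [d1 d2].
  rewrite /cross /psub /=; ring.
apply/negP => /eqP hw.
have c0 : cross ((0:R), (0:R)) d = 0 by rewrite /cross /= !mul0r subrr.
move: Ew; rewrite hw c0 => Ew.
move: fi fj; rewrite Efi Efj => fi fj.
set X := cross (psub B A) d in fi Ew Egp.
set Y := cross (psub D C) d in fj Ew.
set ci' := orient A B (0, 0) in ci Ew.
set cj' := orient C D (0, 0) in cj Ew.
have X0 : 0 <= X by rewrite pmulr_rge0 in fi.
have Y0 : 0 <= - Y by rewrite mulNr -mulrN pmulr_rge0 in fj.
have h1 : 0 <= cj' * X by apply: mulr_ge0 => //; exact: ltW.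
have h2 : 0 <= ci' * - Y by apply: mulr_ge0 => //; exact: ltW.
have h3 : cj' * X = 0 by move: h2; rewrite mulrN; lra.
move/eqP: h3; rewrite mulf_eq0 (gt_eqF cj) /= => /eqP hX.
by move: gp; rewrite Egp hX oppr0 eqxx.
Qed.

Unset Implicit Arguments.


Theorem lemma1 (R : realFieldType) (k : nat) (v : 'I_k -> pt R)
    (p q : pt R) (i j : 'I_k) :
  (3 <= k)%N ->
  convex_ccw_polygon v ->
  origin_in_interior v ->
  p <> q ->
  general_position v p q ->
  (edgelet_appears v p q i j <-> oriented_line_crosses v p q i j).
Proof.
move=> hk Hc Ho hpq hgp; split.
  move=> [g [[[x gx] _] [Hg _]]].
  have [_ [lam [l0 [[y [Hy ep]] [z [Hz eq]]]]]] := Hg x gx.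
  exists y, z, lam^-1; do 2 (split => //); split; first by rewrite invr_gt0.
  exact: fwd_alg l0 ep eq.
move=> [a [b [tau [Ha [Hb [tau0 eb]]]]]].
have Qa := relint_Q Hc Ha; have Qb := relint_Q Hc Hb.
have wnz : wv (v i) (v (nexti i)) (v j) (v (nexti j)) != (0, 0).
  case: (Ha) => s [s0 [s1 ea]]; case: (Hb) => r [r0 [r1 eb']].
  apply: (w_nz (Ho i) (Ho j) ea eb' (Qb i) (Qa j) eb tau0).
  apply: hgp; rewrite eq_sym; apply: nexti_neq; lia.
have GL : forall x, labeled_center v p q i j x ->
    Gf (v i) (v (nexti i)) (v j) (v (nexti j)) p q x = 0.
  move=> x [lam [_ [[y [[s [_ [_ ey]]] ep]] [z [[r [_ [_ ez]]] eq]]]]].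
  rewrite ey in ep; rewrite ez in eq; exact: G0 ep eq.
exists (labeled_center v p q i j); split; [split; [|split]|split].
- have [e1 e2] := ne_alg tau0 eb.
  exists (psub p (pscale tau^-1 a)), tau^-1; split; first by rewrite invr_gt0.
  by split; [exists a | exists b].
- move=> x1 x2 [l1 [l10 [[y1 [Hy1 ep1]] [z1 [Hz1 eq1]]]]]
               [l2 [l20 [[y2 [Hy2 ep2]] [z2 [Hz2 eq2]]]]] t t0 t1.
  case: Hy1 => s1 [s10 [s11 ey1]]; case: Hy2 => s2 [s20 [s21 ey2]].
  case: Hz1 => r1 [r10 [r11 ez1]]; case: Hz2 => r2 [r20 [r21 ez2]].
  rewrite ey1 in ep1; rewrite ey2 in ep2; rewrite ez1 in eq1; rewrite ez2 in eq2.
  have [y [Hy epy]] := conv_comb t l10 l20 t0 t1 s10 s11 s20 s21 ep1 ep2.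
  have [z [Hz eqz]] := conv_comb t l10 l20 t0 t1 r10 r11 r20 r21 eq1 eq2.
  exists (l1 + t * (l2 - l1)); split.
    have := pos_comb t0 t1 l10 l20; lra.
  by split; [exists y | exists z].
- move=> x1 x2 x3 H1 H2 H3; rewrite /orient.
  have c2 : cross (wv (v i) (v (nexti i)) (v j) (v (nexti j))) (psub x2 x1) = 0.
    by rewrite (Gdiff _ _ _ _ p q) (GL _ H1) (GL _ H2) subrr.
  have c3 : cross (wv (v i) (v (nexti i)) (v j) (v (nexti j))) (psub x3 x1) = 0.
    by rewrite (Gdiff _ _ _ _ p q) (GL _ H1) (GL _ H3) subrr.
  exact: (@cross_par R _ _ _ wnz c2 c3).
- by move=> x Hx; split=> //; exact: (@lab_bis R k v Hc Ho p q i j x Hx).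
- by move=> g' _ Hg' _ x /Hg' [].
Qed.
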